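(* Let $G$ be a cubic graph with $|V(G)|\ge 4$ and let $v\in V(G)$. If $G^v$ is a Klee-graph, then $G$ is a Klee-graph.
   Context: For a cubic graph $G$ and $v\in V(G)$ with neighbours $x_1,x_2,x_3$, $G^v$ denotes the cubic graph obtained by replacing $v$ by a triangle: delete $v$, add new vertices $v_1,v_2,v_3$, the edges $v_1v_2,v_2v_3,v_3v_1$, and the edges $v_ix_i$ for $i=1,2,3$. A graph is a Klee-graph if it is $K_4$, or it equals $H^w$ for some Klee-graph $H$ and some $w\in V(H)$. *)

(* Defs.v *)
(* Cubic (loopless multi)graphs given by an edge-multiplicity
   function m : T -> T -> nat on a finite vertex type T. *)
From mathcomp Require Import all_boot.
Set Implicit Arguments. Unset Strict Implicit. Unset Printing Implicit Defensive.

Definition mgraph (T : finType) := T -> T -> nat.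

Definition cubic (T : finType) (m : mgraph T) : Prop :=
  [/\ forall x y, m x y = m y x, forall x, m x x = 0
    & forall x, \sum_(y : T) m x y = 3].

(* xs = (x_1, x_2, x_3) lists the neighbours of v with multiplicity *)
Definition nbrs (T : finType) (m : mgraph T) (v : T) (xs : 3.-tuple T) : Prop :=
  forall u, m v u = count_mem u xs.

(* vertex set of G^v : V(G) - v plus three new vertices v_1, v_2, v_3 *)
Definition Vexp (T : finType) (v : T) : finType :=
  ({x : T | x != v} + 'I_3)%type.

(* G^v : delete v, add triangle v_1 v_2 v_3 and edges v_i x_i *)
Definition expand (T : finType) (m : mgraph T) (v : T) (xs : 3.-tuple T)
  : mgraph (Vexp v) :=
  fun a b => match a, b with
  | inl x, inl y => m (val x) (val y)
  | inl x, inr i => nat_of_bool (val x == tnth xs i)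
  | inr i, inl y => nat_of_bool (tnth xs i == val y)
  | inr i, inr j => nat_of_bool (i != j)
  end.

Definition giso (T1 T2 : finType) (m1 : mgraph T1) (m2 : mgraph T2) : Prop :=
  exists f : T1 -> T2, bijective f /\ forall a b, m2 (f a) (f b) = m1 a b.

Definition K4 : mgraph 'I_4 := fun i j => nat_of_bool (i != j).

Arguments expand [T] m v xs _ _.

Inductive klee : forall T : finType, mgraph T -> Prop :=
| klee_K4 (T : finType) (m : mgraph T) : giso K4 m -> @klee T m
| klee_exp (T : finType) (m : mgraph T) (H : finType) (mH : mgraph H)
    (w : H) (xs : 3.-tuple H) :
    @klee H mH -> nbrs mH w xs -> giso (expand mH w xs) m -> @klee T m.

(* Main.v *)
Require Import Defs.
From mathcomp Require Import all_boot zify.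
Set Implicit Arguments. Unset Strict Implicit. Unset Printing Implicit Defensive.


Definition simpleg (T : finType) (m : mgraph T) := forall x y, m x y <= 1.

Lemma giso_sym (T1 T2 : finType) (m1 : mgraph T1) (m2 : mgraph T2) :
  giso m1 m2 -> giso m2 m1.
Proof.
case=> f [[g fK gK] Hf]; exists g; split; first by exists f.
by move=> a b; rewrite -Hf !gK.
Qed.

Lemma giso_trans (T1 T2 T3 : finType) (m1 : mgraph T1) (m2 : mgraph T2) (m3 : mgraph T3) :
  giso m1 m2 -> giso m2 m3 -> giso m1 m3.
Proof.
case=> f [bf Hf] [g [bg Hg]]; exists (g \o f); split; first exact: bij_comp.
by move=> a b /=; rewrite Hg Hf.
Qed.

Lemma giso_card (T1 T2 : finType) (m1 : mgraph T1) (m2 : mgraph T2) :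
  giso m1 m2 -> #|T1| = #|T2|.
Proof. by case=> f [bf _]; apply: bij_eq_card bf. Qed.

Lemma cubic_pull (T1 T2 : finType) (m1 : mgraph T1) (m2 : mgraph T2) :
  giso m1 m2 -> cubic m2 -> cubic m1.
Proof.
case=> f [bf Hf] [Hs Hl Hd]; split.
- by move=> x y; rewrite -!Hf Hs.
- by move=> x; rewrite -Hf Hl.
- move=> x; rewrite -(Hd (f x)).
  rewrite (reindex f) /=; last by apply: onW_bij.
  by apply: eq_bigr => y _; rewrite Hf.
Qed.

Lemma cubic_push (T1 T2 : finType) (m1 : mgraph T1) (m2 : mgraph T2) :
  giso m1 m2 -> cubic m1 -> cubic m2.
Proof. by move/giso_sym; apply: cubic_pull. Qed.

Lemma simple_pull (T1 T2 : finType) (m1 : mgraph T1) (m2 : mgraph T2) :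
  giso m1 m2 -> simpleg m2 -> simpleg m1.
Proof. by case=> f [bf Hf] Hs x y; rewrite -Hf. Qed.

Lemma cntE (T : finType) (xs : 3.-tuple T) (u : T) :
  count_mem u xs = \sum_(i < 3) (tnth xs i == u).
Proof.
case: xs => [[|a [|b [|c []]]] //] Hs.
by rewrite !big_ord_recl big_ord0 /= addn0 !(tnth_nth a) /=.
Qed.

Lemma card_Vexp (T : finType) (v : T) : #|Vexp v| = #|T|.+2.
Proof.
rewrite /Vexp card_sum card_ord card_sig.
have := cardC1 v; rewrite /predC1.
have : 0 < #|T| by apply/card_gt0P; exists v.
case: #|T| => // n _ H.
have -> : #|[pred x | x != v]| = n by rewrite /= in H; rewrite -H; apply: eq_card => x; rewrite !inE.
by rewrite addnC.
Qed.

Lemma sum_Vexp (T : finType) (v : T) (F : Vexp v -> nat) :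
  \sum_(a : Vexp v) F a = \sum_(x : {x : T | x != v}) F (inl x) + \sum_(i < 3) F (inr i).
Proof. by rewrite (big_sumType _ xpredT). Qed.

Lemma sum_sig (T : finType) (v : T) (F : T -> nat) :
  \sum_(x : {x : T | x != v}) F (val x) = \sum_(x | x != v) F x.
Proof. by rewrite (big_sub (fun x => x != v)). Qed.

Lemma sum_I3_neq (i : 'I_3) : \sum_(j < 3) (i != j) = 2.
Proof. by rewrite !big_ord_recl big_ord0; case: i => [[|[|[|]]]]. Qed.

Lemma nbrs_notin (T : finType) (m : mgraph T) v xs :
  m v v = 0 -> nbrs m v xs -> forall i, tnth xs i != v.
Proof.
move=> H0 Hn i; apply/eqP => E.
have : v \in tval xs by rewrite -E mem_tnth.
by rewrite -has_pred1 has_count -Hn H0.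
Qed.

Lemma expand_cubic (T : finType) (m : mgraph T) v xs :
  cubic m -> nbrs m v xs -> cubic (expand m v xs).
Proof.
case=> Hs Hl Hd Hn; have Hnv := nbrs_notin (Hl v) Hn.
split.
- by case=> [x|i] [y|j] //=; rewrite ?Hs // eq_sym.
- by case=> [x|i] /=; rewrite ?Hl ?eqxx.
case=> [x|i]; rewrite sum_Vexp /=.
- rewrite (sum_sig v (fun y => m (val x) y)).
  transitivity (\sum_y m (val x) y); last exact: Hd.
  rewrite [in RHS](bigD1 v) //= addnC; congr (_ + _).
  by rewrite Hs Hn cntE; apply: eq_bigr => i _; rewrite eq_sym.
- rewrite sum_I3_neq (sum_sig v (fun y => tnth xs i == y)).
  rewrite (bigD1 (tnth xs i)) ?Hnv //= eqxx big1 // => y /andP [_ H].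
  by rewrite eq_sym (negbTE H).
Qed.

Lemma expand_simple (T : finType) (m : mgraph T) v xs :
  simpleg m -> simpleg (expand m v xs).
Proof. by move=> Hs [x|i] [y|j] /=; rewrite ?Hs ?leq_b1. Qed.

Lemma K4_cubic : cubic K4.
Proof.
split; first by move=> x y; rewrite /K4 eq_sym.
  by move=> x; rewrite /K4 eqxx.
move=> x; rewrite /K4 !big_ord_recl big_ord0.
by case: x => [[|[|[|[|]]]]].
Qed.

Lemma klee_props (T : finType) (m : mgraph T) : klee m -> cubic m /\ simpleg m.
Proof.
elim=> {T m} [T m Hi | T m H mH w xs _ [Hc Hs] Hn Hi].
- split; first exact: cubic_push Hi K4_cubic.
  have H1 := giso_sym Hi. have H2 : simpleg K4 by move=> x y; exact: leq_b1.
  exact: (simple_pull H1 H2).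
- split; first exact: cubic_push Hi (expand_cubic Hc Hn).
  exact: simple_pull (giso_sym Hi) (@expand_simple _ _ w xs Hs).
Qed.

Lemma klee_iso (T1 T2 : finType) (m1 : mgraph T1) (m2 : mgraph T2) :
  klee m1 -> giso m1 m2 -> klee m2.
Proof.
case=> {T1 m1} [T m Hi | T m H mH w xs Hk Hn Hi] Hi2.
- by apply: klee_K4; apply: giso_trans Hi Hi2.
- by apply: (klee_exp Hk Hn); apply: giso_trans Hi Hi2.
Qed.


Lemma cubic_even (T : finType) (m : mgraph T) : cubic m -> exists k, #|T| * 3 = k.*2.
Proof.
case=> Hs Hl Hd.
pose r := @enum_rank T.
exists (\sum_x \sum_y (if r x < r y then m x y else 0)).
have E : forall x y, m x y = (if r x < r y then m x y else 0) + (if r y < r x then m y x else 0).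
  move=> x y; case: (ltngtP (r x) (r y)) => H; rewrite ?addn0 ?add0n //; try by rewrite Hs.
  by have := enum_rank_inj (val_inj H) => ->; rewrite Hl.
rewrite -sum_nat_const.
transitivity (\sum_x \sum_y m x y); first by apply: eq_bigr => x _; rewrite Hd.
rewrite -addnn.
under eq_bigr => x _ do (under eq_bigr => y _ do rewrite E; rewrite big_split).
rewrite big_split /=; congr (_ + _).
by rewrite exchange_big.
Qed.

Lemma sum_inr (T : finType) (m : mgraph T) v xs : nbrs m v xs ->
  forall u : {x : T | x != v}, \sum_(i < 3) expand m v xs (inr i) (inl u) = m v (val u).
Proof. by move=> Hn u; rewrite Hn cntE. Qed.

Lemma nbrs_inj (T : finType) (m : mgraph T) v xs :
  nbrs m v xs -> simpleg m -> injective (tnth xs).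
Proof.
move=> Hn Hs i j E; apply/eqP; apply: contraT => Hij.
have := Hs v (tnth xs i); rewrite Hn cntE (bigD1 i) // (bigD1 j) /=; last by rewrite eq_sym.
by rewrite eqxx E eqxx.
Qed.

Lemma third (i j : 'I_3) : i != j -> exists k : 'I_3, (k != i) && (k != j).
Proof.
case: i => [[|[|[|//]]] Hi]; case: j => [[|[|[|//]]] Hj] // _;
  first [ by exists (@Ordinal 3 0 isT) | by exists (@Ordinal 3 1 isT) | by exists (@Ordinal 3 2 isT) ].
Qed.

Lemma tri_class (H : finType) (mH : mgraph H) w ys (p : 'I_3 -> Vexp w) :
  injective (tnth ys) -> injective p ->
  (forall i j, expand mH w ys (p i) (p j) = (i != j)) ->
  (forall i, exists j, p i = inr j) \/ (forall i, exists y, p i = inl y).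
Proof.
move=> Hinj pinj Hp.
have mixed : forall i j a y, p i = inr a -> p j = inl y -> False.
  move=> i j a y Ei Ej.
  have Hij : i != j by apply: contraTneq isT => E; move: Ei; rewrite E Ej.
  have := Hp i j; rewrite Ei Ej /= Hij; case: eqP => // Hay _.
  have [k /andP [Hki Hkj]] := third Hij.
  case Ek: (p k) => [z|b].
  - have := Hp i k; have Hik : (i == k) = false by rewrite eq_sym (negbTE Hki).
    rewrite Ei Ek /= Hik.
    case: eqP => // Haz _; have Ezy : z = y by apply: val_inj; exact: (etrans (esym Haz) Hay).
    by move: Hkj; rewrite -(pinj k j) ?eqxx // Ek Ej Ezy.
  - have := Hp k j; rewrite Ek Ej /= (negbTE Hkj).
    case: eqP => // Hby _; have Eba : b = a by apply: Hinj; rewrite Hby.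
    by move: Hki; rewrite -(pinj k i) ?eqxx // Ek Ei Eba.
case E0: (p ord0) => [y|a].
- right => i; case Ei: (p i) => [z|b]; first by exists z.
  by case: (mixed i ord0 b y Ei E0).
- left => i; case Ei: (p i) => [z|b]; last by exists b.
  by case: (mixed ord0 i a z E0 Ei).
Qed.

Lemma split_v (T : finType) (v a : T) : a = v \/ exists a' : {x : T | x != v}, a = val a'.
Proof. by case: (eqVneq a v) => [->|H]; [left | right; exists (exist _ a H)]. Qed.

Definition prV (H : finType) (w : H) (a : Vexp w) : H :=
  match a with inl y => val y | inr _ => w end.

Lemma uniq_iso (T : finType) (m : mgraph T) v xs (H : finType) (mH : mgraph H) w ys
  (phi : Vexp v -> Vexp w) :
  cubic m -> cubic mH -> nbrs m v xs -> nbrs mH w ys -> bijective phi ->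
  (forall a b, expand mH w ys (phi a) (phi b) = expand m v xs a b) ->
  (forall i, exists j, phi (inr i) = inr j) -> giso m mH.
Proof.
move=> [Hs Hl Hd] [HsH HlH HdH] Hn HnH bphi Hphi Hinr.
pose pi (i : 'I_3) := match phi (inr i) with inr j => j | inl _ => i end.
have Hpi : forall i, phi (inr i) = inr (pi i).
  by move=> i; rewrite /pi; case: (Hinr i) => j ->.
have pinj : injective pi.
  move=> i j E; have : phi (inr i) = phi (inr j) by rewrite !Hpi E.
  by move/(bij_inj bphi); case.
have [pinv piK piKV] := injF_bij pinj.
have Hinl : forall x', exists y', phi (inl x') = inl y'.
  move=> x'; case E: (phi (inl x')) => [y'|j]; first by exists y'.
  have : phi (inl x') = phi (inr (pinv j)) by rewrite E Hpi piKV.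
  by move/(bij_inj bphi).
pose f (x : T) := oapp (fun x' => prV (phi (inl x'))) w (insub x).
have Hfv : f v = w by rewrite /f insubF // eqxx.
have Hfx : forall x' : {x : T | x != v}, f (val x') = prV (phi (inl x')) by move=> x'; rewrite /f valK.
have Hvb : forall b' : {x : T | x != v}, mH w (f (val b')) = m v (val b').
  move=> b'; rewrite Hfx; case: (Hinl b') => y' Ey; rewrite Ey /=.
  rewrite -(sum_inr HnH y') -(sum_inr Hn b') (reindex_inj pinj).
  by apply: eq_bigr => i _; rewrite -Ey -Hpi Hphi.
exists f; split.
- apply: inj_card_bij.
  + move=> a b; case: (split_v v a) => [->|[a' ->]]; case: (split_v v b) => [->|[b' ->]] //.
    * rewrite Hfv Hfx; case: (Hinl b') => [[y Hy]] -> /= E.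
      by move: Hy; rewrite -E eqxx.
    * rewrite Hfv Hfx; case: (Hinl a') => [[y Hy]] -> /= E.
      by move: Hy; rewrite E eqxx.
    * rewrite !Hfx; case: (Hinl a') => y1 E1; case: (Hinl b') => y2 E2.
      rewrite E1 E2 /= => /val_inj E.
      have : inl a' = inl b' :> Vexp v by apply: (bij_inj bphi); rewrite E1 E2 E.
      by case=> ->.
  + have := bij_eq_card bphi; rewrite !card_Vexp; case=> ->; exact: leqnn.
- move=> a b; case: (split_v v a) => [->|[a' ->]]; case: (split_v v b) => [->|[b' ->]].
  + by rewrite Hfv HlH Hl.
  + by rewrite Hfv Hvb.
  + by rewrite Hfv HsH Hvb Hs.
  + rewrite !Hfx; case: (Hinl a') => y1 E1; case: (Hinl b') => y2 E2.
    have := Hphi (inl a') (inl b'); rewrite E1 E2 /=; done.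
Qed.


Lemma sum_eq1 (T : finType) (a : T) : \sum_y (a == y) = 1.
Proof. by rewrite (bigD1 a) //= eqxx big1 // => y /negbTE; rewrite eq_sym => ->. Qed.

Lemma sum1_unique (U : finType) (P : pred U) (F : U -> nat) :
  \sum_(y | P y) F y = 1 -> exists y, P y /\ forall z, P z -> F z = (z == y).
Proof.
move=> HS; case: (pickP [pred y | P y && (0 < F y)]) => [y /andP [Py Fy] | none].
- exists y; split => // z Pz.
  move: HS; rewrite (bigD1 y) //= => HS.
  have Hy1 : F y = 1 by move: HS Fy; case: (F y) => [|[|n]] //; rewrite addSn.
  move: HS; rewrite Hy1 add1n => -[] /eqP; rewrite sum_nat_eq0 => /forallP Hall.
  have [->|Hzy] := eqVneq z y; first by rewrite ?eqxx Hy1.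
  by have := Hall z; rewrite Pz Hzy /= => /eqP ->.
- move: HS; rewrite big1 // => y Py; have := none y; rewrite /= Py /=.
  by case: (F y).
Qed.

Lemma expand_cubic_rev (T : finType) (m : mgraph T) v xs :
  (forall x y, m x y = m y x) -> (forall x, m x x = 0) -> nbrs m v xs ->
  cubic (expand m v xs) -> cubic m.
Proof.
move=> Hs Hl Hn [_ _ Hd]; split => // x.
case: (split_v v x) => [->|[x' ->]].
- under eq_bigr => y _ do rewrite Hn cntE.
  rewrite exchange_big /=.
  under eq_bigr => i _ do rewrite sum_eq1.
  by rewrite sum_nat_const card_ord.
- have := Hd (inl x'); rewrite sum_Vexp /= (sum_sig v (fun y => m (val x') y)).
  move=> HH; rewrite (bigD1 v) //= -HH addnC; congr (_ + _).
  by rewrite Hs Hn cntE; apply: eq_bigr => i _; rewrite eq_sym.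
Qed.

Section Contract.
Variables (U : finType) (K : mgraph U) (bs : 3.-tuple U).
Hypotheses (HK : cubic K) (Htri : forall i j, K (tnth bs i) (tnth bs j) = (i != j)).

Definition b0 := tnth bs ord0.

Lemma bs_inj : injective (tnth bs).
Proof.
move=> i j E; apply/eqP; apply: contraT => Hij.
have := Htri i j; rewrite E Hij; case: HK => _ -> _ //.
Qed.

Lemma bs_uniq : uniq bs.
Proof. by rewrite -(map_tnth_enum bs) map_inj_uniq ?enum_uniq //; apply: bs_inj. Qed.

Lemma outdeg i : \sum_(y | y \notin bs) K (tnth bs i) y = 1.
Proof.
case: HK => _ _ Hd; have := Hd (tnth bs i); rewrite (bigID (fun y => y \in bs)) /=.
have -> : \sum_(y | y \in bs) K (tnth bs i) y = 2.
  rewrite -(big_uniq _ bs_uniq) (big_tuple _ _ bs (fun _ => true) (fun y => K (tnth bs i) y)).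
  by under eq_bigr => j _ do rewrite Htri; rewrite sum_I3_neq.
by move=> E; apply/eqP; rewrite -(eqn_add2l 2) E.
Qed.

Definition o i := odflt b0 [pick y | (y \notin bs) && (K (tnth bs i) y == 1)].

Lemma o_spec i : o i \notin bs /\ forall y, y \notin bs -> K (tnth bs i) y = (y == o i).
Proof.
have [y [Py Hy]] := sum1_unique (outdeg i).
suff -> : o i = y by [].
rewrite /o; case: pickP => [z /andP [Pz /eqP Hz] | none] /=.
- by move: Hz; rewrite Hy // ; case: eqP.
- by have := none y; rewrite /= Py Hy // eqxx.
Qed.

Lemma o_notin i : o i \notin bs. Proof. by case: (o_spec i). Qed.
Lemma Ko i y : y \notin bs -> K (tnth bs i) y = (y == o i).
Proof. by case: (o_spec i) => _; apply. Qed.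

Definition Pc := fun x : U => (x == b0) || (x \notin bs).
Definition Tc : finType := {x : U | Pc x}.

Lemma o_in i : Pc (o i). Proof. by rewrite /Pc o_notin orbT. Qed.
Lemma b0_in : Pc b0. Proof. by rewrite /Pc eqxx. Qed.

Definition cc : Tc := exist _ b0 b0_in.
Definition zs : 3.-tuple Tc := [tuple (exist _ (o i) (o_in i) : Tc) | i < 3].

Definition Kc : mgraph Tc := fun x y =>
  if val x == b0 then (if val y == b0 then 0 else \sum_(i < 3) K (tnth bs i) (val y))
  else if val y == b0 then \sum_(i < 3) K (tnth bs i) (val x) else K (val x) (val y).

Lemma b0_in_bs : b0 \in bs. Proof. exact: mem_tnth. Qed.

Lemma notb0 (x : Tc) : val x != b0 -> val x \notin bs.
Proof. by case: x => x /=; rewrite /Pc => /orP [->|]. Qed.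

Lemma notc (x : Tc) : x != cc -> val x \notin bs.
Proof. by move=> H; apply: notb0; apply: contra H => /eqP E; apply/eqP/val_inj. Qed.

Lemma tnth_zs i : val (tnth zs i) = o i.
Proof. by rewrite tnth_mktuple. Qed.

Lemma nbrs_c : nbrs Kc cc zs.
Proof.
move=> u; rewrite cntE /Kc /= eqxx.
have E : forall i, (tnth zs i == u) = (o i == val u).
  move=> i; apply/eqP/eqP => [<-|Ei]; first by rewrite tnth_zs.
  by apply: val_inj; rewrite tnth_zs.
rewrite [RHS](eq_bigr (fun i => nat_of_bool (o i == val u))); last first.
  by move=> i _; rewrite E.
case: ifP => [/eqP Eu | /negbT Hu].
- have Eu' : val u = b0 := Eu.
  rewrite big1 // => i _; rewrite Eu'; case: eqP => // E'.
  by have := o_notin i; rewrite E' b0_in_bs.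
- by apply: eq_bigr => i _; rewrite Ko ?notb0 // eq_sym.
Qed.

Lemma Kc_sym x y : Kc x y = Kc y x.
Proof.
rewrite /Kc; case: ifP => Hx; case: ifP => Hy //.
by case: HK => Hs _ _; rewrite Hs.
Qed.

Lemma Kc_loop x : Kc x x = 0.
Proof. by rewrite /Kc; case: ifP => H; rewrite ?H //; case: HK => _ -> _. Qed.

Definition psi (a : Vexp cc) : U := match a with inl x => val (val x) | inr i => tnth bs i end.

Lemma valc (x : {x : Tc | x != cc}) : val (val x) != b0.
Proof. by case: x => x /= Hx; apply: contra Hx => /eqP E; apply/eqP/val_inj. Qed.

Lemma psi_edges a b : K (psi a) (psi b) = expand Kc cc zs a b.
Proof.
case: HK => Hs Hl _.
case: a => [x|i]; case: b => [y|j] /=.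
- by rewrite /Kc (negbTE (valc x)) (negbTE (valc y)).
- rewrite Hs Ko ?notc ?(valP x) // -tnth_zs.
  by rewrite (inj_eq val_inj).
- rewrite Ko ?notc ?(valP y) // -tnth_zs (inj_eq val_inj).
  by rewrite eq_sym.
- exact: Htri.
Qed.

Lemma card_Tc : #|Tc|.+2 = #|U|.
Proof.
rewrite card_sig.
pose A := [pred x | x \in bs].
have H1 := cardC [predD1 A & b0].
have H2 := cardD1 b0 A.
have HA : #|A| = 3 by rewrite -(size_tuple bs) -(card_uniqP bs_uniq); apply: eq_card.
rewrite HA inE /= b0_in_bs in H2.
have -> : #|[pred x | Pc x]| = #|[predC [predD1 A & b0]]|.
  by apply: eq_card => x; rewrite !inE /Pc negb_and negbK.
have E : #|[predD1 A & b0]| = 2 by case: H2.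
by rewrite E in H1; rewrite -H1.
Qed.

Lemma psi_bij : bijective psi.
Proof.
apply: inj_card_bij; last by rewrite card_Vexp card_Tc.
case=> [x|i] [y|j] /=.
- by move=> E; congr inl; apply: val_inj; apply: val_inj.
- move=> E; have H := notc (valP x); move: H => /=; rewrite E mem_tnth //.
- move=> E; have H := notc (valP y); move: H => /=; rewrite -E mem_tnth //.
- by move/bs_inj ->.
Qed.

Lemma giso_c : giso (expand Kc cc zs) K.
Proof. by exists psi; split; [exact: psi_bij | move=> a b; exact: psi_edges]. Qed.

Lemma Kc_cubic : cubic Kc.
Proof.
apply: (expand_cubic_rev Kc_sym Kc_loop nbrs_c).
exact: cubic_pull giso_c HK.
Qed.

End Contract.


Lemma expand_sym (T : finType) (m : mgraph T) v xs :
  (forall x y, m x y = m y x) -> forall a b, expand m v xs a b = expand m v xs b a.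
Proof.
move=> Hs [x|i] [y|j] /=; [exact: Hs | by rewrite eq_sym | by rewrite eq_sym | by rewrite eq_sym].
Qed.

Lemma Kc_oo (U : finType) (K : mgraph U) (bs : 3.-tuple U) (x y : Tc bs) :
  val x != b0 bs -> val y != b0 bs -> Kc K x y = K (val x) (val y).
Proof. by move=> Hx Hy; rewrite /Kc (negbTE Hx) (negbTE Hy). Qed.

Lemma Kc_co (U : finType) (K : mgraph U) (bs : 3.-tuple U) (y : Tc bs) :
  val y != b0 bs -> Kc K (cc bs) y = \sum_(i < 3) K (tnth bs i) (val y).
Proof. by move=> Hy; rewrite /Kc /= eqxx (negbTE Hy). Qed.

Lemma Kc_oc (U : finType) (K : mgraph U) (bs : 3.-tuple U) (x : Tc bs) :
  val x != b0 bs -> Kc K x (cc bs) = \sum_(i < 3) K (tnth bs i) (val x).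
Proof. by move=> Hx; rewrite /Kc /= eqxx (negbTE Hx). Qed.

Lemma Kc_cc (U : finType) (K : mgraph U) (bs : 3.-tuple U) : Kc K (cc bs) (cc bs) = 0.
Proof. by rewrite /Kc /= eqxx. Qed.

Section Sub2.
Variables (T : finType) (m : mgraph T) (v : T) (xs : 3.-tuple T)
  (H : finType) (mH : mgraph H) (w : H) (ys : 3.-tuple H)
  (phi : Vexp v -> Vexp w) (a' : 'I_3 -> {y : H | y != w}).
Hypotheses (Hc : cubic m) (HcH : cubic mH) (Hn : nbrs m v xs) (HnH : nbrs mH w ys)
  (bphi : bijective phi)
  (Hphi : forall a b, expand mH w ys (phi a) (phi b) = expand m v xs a b)
  (Ha : forall i, phi (inr i) = inl (a' i)).

Definition as3 := [tuple val (a' i) | i < 3].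

Lemma tnth_as i : tnth as3 i = val (a' i).
Proof. by rewrite tnth_mktuple. Qed.

Lemma Htri3 i j : mH (tnth as3 i) (tnth as3 j) = (i != j).
Proof. by rewrite !tnth_as; have := Hphi (inr i) (inr j); rewrite !Ha. Qed.

Lemma as_uniq : uniq as3.
Proof. exact: bs_uniq HcH Htri3. Qed.

Lemma w_notin : w \notin as3.
Proof.
apply/tnthP => -[i Ei]; have := valP (a' i); rewrite -tnth_as -Ei.
by rewrite eqxx.
Qed.

Lemma decode (t' : {x : T | x != v}) :
  (exists j, phi (inl t') = inr j) \/ (exists h', phi (inl t') = inl h' /\ val h' \notin as3).
Proof.
case E: (phi (inl t')) => [h'|j]; last by left; exists j.
right; exists h'; split => //; apply/tnthP => -[i Ei].
have Eh : h' = a' i by apply: val_inj; rewrite Ei tnth_as.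
have : phi (inl t') = phi (inr i) by rewrite E Ha Eh.
by move/(bij_inj bphi).
Qed.

Lemma Hmvb (b' : {x : T | x != v}) j : phi (inl b') = inr j -> m v (val b') = (tnth ys j \in as3).
Proof.
move=> Eb; rewrite -(sum_inr Hn b').
under eq_bigr => i _ do rewrite -Hphi Ha Eb.
rewrite -(count_uniq_mem _ as_uniq) cntE.
by apply: eq_bigr => i _; rewrite tnth_as.
Qed.

Lemma Hmvh (b' : {x : T | x != v}) h' : phi (inl b') = inl h' ->
  m v (val b') = \sum_(i < 3) mH (tnth as3 i) (val h').
Proof.
move=> Eb; rewrite -(sum_inr Hn b').
under eq_bigr => i _ do rewrite -Hphi Ha Eb.
by apply: eq_bigr => i _; rewrite tnth_as.
Qed.

Lemma card_eq : #|T| = #|H|.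
Proof. by have := bij_eq_card bphi; rewrite !card_Vexp => -[]. Qed.

Lemma exists_b j : exists b', phi (inl b') = inr j.
Proof.
have [g phiK gK] := bphi.
case E: (g (inr j)) => [b'|i]; first by exists b'; rewrite -E gK.
have : phi (inr i) = inr j by rewrite -E gK.
by rewrite Ha.
Qed.

Lemma small_case : #|T| = 4 -> klee m.
Proof.
move=> H4; case: Hc => Hs Hl _; case: HcH => _ HlH _.
have HnY := nbrs_notin (HlH w) HnH.
have HinA : forall j, tnth ys j \in as3.
  move=> j; apply: contraT => Hj.
  pose A := [pred x | x \in as3].
  have HA : #|A| = 3 by rewrite -(size_tuple as3) -(card_uniqP as_uniq); apply: eq_card.
  have C1 := cardU1 w A; rewrite HA inE /= w_notin in C1.
  have C2 := cardU1 (tnth ys j) [predU1 w & A].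
  rewrite C1 !inE /= (negbTE (HnY j)) (negbTE Hj) /= in C2.
  by have := max_card [predU1 (tnth ys j) & [predU1 w & A]]; rewrite C2 -card_eq H4.
have [g phiK gK] := bphi.
have Hg : forall j, exists b', g (inr j) = inl b' /\ phi (inl b') = inr j.
  by move=> j; have [b' Eb] := exists_b j; exists b'; rewrite -Eb phiK.
pose bv j := match g (inr j) with inl t => val t | inr _ => v end.
have Hbv : forall j, exists b', bv j = val b' /\ phi (inl b') = inr j.
  by move=> j; have [b' [E1 E2]] := Hg j; exists b'; rewrite /bv E1.
have F1 : forall j, m v (bv j) = 1.
  by move=> j; have [b' [-> Eb]] := Hbv j; rewrite (Hmvb Eb) HinA.
have F1' : forall j, m (bv j) v = 1 by move=> j; rewrite Hs F1.
have F2 : forall j k, m (bv j) (bv k) = (j != k).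
  move=> j k; have [bj [-> Ej]] := Hbv j; have [bk [-> Ek]] := Hbv k.
  by have := Hphi (inl bj) (inl bk); rewrite Ej Ek /= => <-.
pose f (i : 'I_4) := nth v [:: v; bv (@Ordinal 3 0 isT); bv (@Ordinal 3 1 isT); bv (@Ordinal 3 2 isT)] i.
have Hedge : forall a b, m (f a) (f b) = K4 a b.
  move=> [[|[|[|[|//]]]] Ha1] [[|[|[|[|//]]]] Hb1];
    rewrite /f /K4 /= ?Hl ?F1 ?F1' ?F2 //.
apply: klee_K4; exists f; split => //.
apply: inj_card_bij; last by rewrite H4 card_ord.
move=> i j E; apply/eqP; apply: contraT => Hij.
by have := Hedge i j; rewrite E Hl /K4 Hij.
Qed.

Lemma big_case :
  (forall (Tc : finType) (K' : mgraph Tc) c zs, cubic K' -> 4 <= #|Tc| -> nbrs K' c zs ->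
     giso (expand K' c zs) mH -> klee K') ->
  6 <= #|T| -> klee m.
Proof.
move=> IHk H6.
have HK' : klee (Kc mH (bs := as3)).
  apply: (IHk _ _ _ _ (Kc_cubic HcH Htri3) _ (nbrs_c HcH Htri3) (giso_c HcH Htri3)).
  by have := card_Tc HcH Htri3; rewrite -card_eq; lia.
have b0_in : b0 as3 \in as3 by apply: mem_tnth.
have Pw : Pc as3 w by rewrite /Pc w_notin orbT.
pose w' : Tc as3 := exist _ w Pw.
pose ys' : 3.-tuple (Tc as3) := [tuple insubd (cc as3) (tnth ys j) | j < 3].
have Vys : forall j, val (tnth ys' j) = if tnth ys j \in as3 then b0 as3 else tnth ys j.
  move=> j; rewrite tnth_mktuple val_insubd /Pc /=.
  have [->|_] /= := eqVneq (tnth ys j) (b0 as3); first by rewrite b0_in.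
  by case: (tnth ys j \in as3).
have wb0 : w != b0 as3 by apply: contraNneq w_notin => ->.
have Ecc : forall j, (tnth ys' j == cc as3) = (tnth ys j \in as3).
  move=> j; apply/eqP/idP => [E|Hin].
  - have := Vys j; rewrite E /=; case: ifP => // Hni Eb; by move: Hni; rewrite -Eb b0_in.
  - by apply: val_inj; rewrite Vys Hin.
have Hn' : nbrs (Kc mH (bs := as3)) w' ys'.
  move=> u; rewrite cntE.
  have Ew : val w' != b0 as3 by [].
  case: (eqVneq (val u) (b0 as3)) => Hu.
  - have -> : u = cc as3 by apply: val_inj.
    rewrite Kc_oc //.
    under [RHS]eq_bigr => j _ do rewrite Ecc -(count_uniq_mem _ as_uniq) cntE.
    rewrite exchange_big /=; apply: eq_bigr => i _.
    case: HcH => HsH _ _.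
    by rewrite HsH HnH cntE; apply: eq_bigr => j _; rewrite eq_sym.
  - have Hnin : val u \notin as3 by apply: notb0.
    rewrite Kc_oo // HnH cntE; apply: eq_bigr => j _.
    congr nat_of_bool; apply/eqP/eqP => [E|E].
    + have Hn2 : tnth ys j \notin as3 by rewrite E.
      by apply: val_inj; rewrite Vys (negbTE Hn2).
    + have Vu : val u = if tnth ys j \in as3 then b0 as3 else tnth ys j.
        rewrite -E; exact: Vys.
      move: Vu; case: ifP => // _ Eb; exfalso; move/negP: Hu; apply; apply/eqP; exact: Eb.
case: (HcH) => HsH HlH _; case: (Hc) => Hs Hl _.
have Hcw : cc as3 != w'.
  apply/eqP => E; have E' : b0 as3 = w := congr1 val E.
  by move: wb0; rewrite E' eqxx.
pose c2 : {y : Tc as3 | y != w'} := exist _ (cc as3) Hcw.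
pose liftH (h : H) : {y : Tc as3 | y != w'} := insubd c2 (insubd (cc as3) h).
have VliftH : forall h, h \notin as3 -> h != w -> val (val (liftH h)) = h.
  move=> h Hh Hw.
  have Ein : val (insubd (cc as3) h) = h by rewrite val_insubd /Pc Hh orbT.
  have Pout : insubd (cc as3) h != w'.
    apply/eqP => E; have : val (insubd (cc as3) h) = val w' by rewrite E.
    by rewrite Ein => Ehw; move: Hw; rewrite Ehw eqxx.
  rewrite /liftH (val_insubd c2) /= Pout /=; exact: Ein.
have Lnb0 : forall h, h \notin as3 -> h != w -> val (val (liftH h)) != b0 as3.
  by move=> h Hh Hw; rewrite VliftH //; apply: contraNneq Hh => ->.
have Lnin : forall h, h \notin as3 -> h != w -> val (val (liftH h)) \notin as3.
  by move=> h Hh Hw; rewrite VliftH.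
pose chi (t : T) : Vexp w' := oapp (fun t' => match phi (inl t') with
    inr j => inr j | inl h' => inl (liftH (val h')) end) (inl c2) (insub t).
have chiv : chi v = inl c2 by rewrite /chi insubF // eqxx.
have chij : forall t' j, phi (inl t') = inr j -> chi (val t') = inr j.
  by move=> t' j E; rewrite /chi valK /= E.
have chih : forall t' h', phi (inl t') = inl h' -> chi (val t') = inl (liftH (val h')).
  by move=> t' h' E; rewrite /chi valK /= E.
pose E := expand (Kc mH (bs := as3)) w' ys'.
have Esym : forall a b, E a b = E b a := @expand_sym _ _ w' ys' (Kc_sym HcH).
have Hmix : forall j (L : Tc as3), val L \notin as3 -> (tnth ys' j == L) = (tnth ys j == val L).
  move=> j L HL; apply/eqP/eqP => [EL|Ej].
  - have V : val L = if tnth ys j \in as3 then b0 as3 else tnth ys j by rewrite -EL; exact: Vys.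
    case Hc': (tnth ys j \in as3) in V.
    + by move: HL; rewrite V b0_in.
    + by rewrite V.
  - have Hn2 : tnth ys j \notin as3 by rewrite Ej.
    by apply: val_inj; rewrite Vys (negbTE Hn2).
have Hv : forall b, E (chi v) (chi b) = m v b.
  move=> b; case: (split_v v b) => [->|[b' ->]].
  - rewrite chiv; have -> : E (inl c2) (inl c2) = Kc mH (cc as3) (cc as3) by [].
    by rewrite Kc_cc Hl.
  - case: (decode b') => [[j Ej] | [h' [Eh Hh]]].
    + rewrite chiv (chij _ _ Ej) (Hmvb Ej) -Ecc eq_sym.
      by [].
    + rewrite chiv (chih _ _ Eh).
      have -> : E (inl c2) (inl (liftH (val h'))) = Kc mH (cc as3) (val (liftH (val h'))) by [].
      rewrite Kc_co; last exact: Lnb0 Hh (valP h').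
      by rewrite VliftH ?(valP h') // (Hmvh Eh).
have Hoo : forall a' b' : {x : T | x != v}, E (chi (val a')) (chi (val b')) = m (val a') (val b').
  move=> a1 b1.
  have key : m (val a1) (val b1) = expand mH w ys (phi (inl a1)) (phi (inl b1)) by rewrite Hphi.
  rewrite key.
  case: (decode a1) => [[j Ej] | [h1 [Eh1 Hh1]]];
  case: (decode b1) => [[k Ek] | [h2 [Eh2 Hh2]]].
  - by rewrite (chij _ _ Ej) (chij _ _ Ek) Ej Ek.
  - rewrite (chij _ _ Ej) (chih _ _ Eh2) Ej Eh2.
    have -> : E (inr j) (inl (liftH (val h2))) = (tnth ys' j == val (liftH (val h2))) by [].
    rewrite Hmix; last exact: Lnin Hh2 (valP h2).
    by rewrite VliftH ?(valP h2).
  - rewrite (chih _ _ Eh1) (chij _ _ Ek) Eh1 Ek.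
    have -> : E (inl (liftH (val h1))) (inr k) = (val (liftH (val h1)) == tnth ys' k) by [].
    rewrite eq_sym Hmix; last exact: Lnin Hh1 (valP h1).
    by rewrite VliftH ?(valP h1) // eq_sym.
  - rewrite (chih _ _ Eh1) (chih _ _ Eh2) Eh1 Eh2.
    have -> : E (inl (liftH (val h1))) (inl (liftH (val h2))) =
      Kc mH (val (liftH (val h1))) (val (liftH (val h2))) by [].
    rewrite Kc_oo; [|exact: Lnb0 Hh1 (valP h1)|exact: Lnb0 Hh2 (valP h2)].
    by rewrite !VliftH ?(valP h1) ?(valP h2).
apply: (klee_exp HK' Hn'); apply: giso_sym; exists chi; split; last first.
  move=> a b; case: (split_v v a) => [->|[a1 ->]].
  - exact: Hv.
  - case: (split_v v b) => [->|[b1 ->]]; last exact: Hoo.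
    transitivity (E (chi v) (chi (val a1))); first exact: Esym.
    by rewrite Hv Hs.
apply: inj_card_bij; last by rewrite card_Vexp (card_Tc HcH Htri3) card_eq.
have chiNv : forall a1 : {x : T | x != v}, chi (val a1) != chi v.
  move=> a1; rewrite chiv; case: (decode a1) => [[j Ej] | [h1 [Eh1 Hh1]]].
  - by rewrite (chij _ _ Ej).
  - rewrite (chih _ _ Eh1); apply/eqP => -[] /(congr1 (fun x => val (val x))).
    rewrite VliftH ?(valP h1) // => Eb.
    have Eb' : val h1 = b0 as3 by first [exact: Eb | exact: esym Eb].
    by move: Hh1; rewrite Eb' b0_in.
move=> a b; case: (split_v v a) => [->|[a1 ->]]; case: (split_v v b) => [->|[b1 ->]] //.
- by move=> Eq; move: (chiNv b1); rewrite Eq eqxx.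
- by move=> Eq; move: (chiNv a1); rewrite Eq eqxx.
- move=> Eq; congr val.
  case: (decode a1) => [[j Ej] | [h1 [Eh1 Hh1]]];
  case: (decode b1) => [[k Ek] | [h2 [Eh2 Hh2]]].
  + move: Eq; rewrite (chij _ _ Ej) (chij _ _ Ek) => -[] Ejk.
    have : inl a1 = inl b1 :> Vexp v by apply: (bij_inj bphi); rewrite Ej Ek Ejk.
    by case.
  + by move: Eq; rewrite (chij _ _ Ej) (chih _ _ Eh2).
  + by move: Eq; rewrite (chih _ _ Eh1) (chij _ _ Ek).
  + move: Eq; rewrite (chih _ _ Eh1) (chih _ _ Eh2) => -[] /(congr1 (fun x => val (val x))).
    rewrite !VliftH ?(valP h1) ?(valP h2) // => /val_inj Eh.
    have : inl a1 = inl b1 :> Vexp v by apply: (bij_inj bphi); rewrite Eh1 Eh2 Eh.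
    by case.
Qed.

End Sub2.



Lemma giso_refl (T : finType) (m : mgraph T) : giso m m.
Proof. by exists id; split => //; exists id. Qed.

Lemma main_ind (K0 : finType) (k : mgraph K0) : klee k ->
  forall (T : finType) (m : mgraph T) v xs, cubic m -> 4 <= #|T| -> nbrs m v xs ->
  giso (expand m v xs) k -> klee m.
Proof.
elim=> {K0 k} [K0 k Hi | K0 k H mH w ys HkH IH HnH Hi] T m v xs Hc H4 Hn Hiso.
- have := giso_card Hiso; have := giso_card Hi; rewrite card_Vexp card_ord. lia.
- have [HcH HsH] := klee_props HkH.
  have [phi [bphi Hphi]] := giso_trans Hiso (giso_sym Hi).
  have Hinj := nbrs_inj HnH HsH.
  have pinj : injective (fun i => phi (inr i)) by move=> i j /(bij_inj bphi) [].
  have Hp : forall i j, expand mH w ys (phi (inr i)) (phi (inr j)) = (i != j) by move=> i j; rewrite Hphi.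
  case: (tri_class Hinj pinj Hp) => [Hr | Hl].
  + apply: (klee_iso HkH); apply: giso_sym; exact: (uniq_iso Hc HcH Hn HnH bphi Hphi Hr).
  + have [y0 Ey0] := Hl ord0.
    pose a' i := match phi (inr i) with inl y => y | inr _ => y0 end.
    have Ha : forall i, phi (inr i) = inl (a' i) by move=> i; rewrite /a'; case: (Hl i) => y ->.
    have [k2 Hk2] := cubic_even Hc.
    have : #|T| = 4 \/ 6 <= #|T| by lia.
    case=> [E4|H6].
    * exact: (small_case Hc HcH Hn HnH bphi Hphi Ha E4).
    * apply: (big_case Hc HcH Hn HnH bphi Hphi Ha _ H6) => Tc K' c zs HcK H4' HnK HisoK.
      exact: (IH _ _ _ _ HcK H4' HnK HisoK).
Qed.

Unset Implicit Arguments.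

Theorem mainTheorem4 (T : finType) (m : mgraph T) (v : T) (xs : 3.-tuple T) :
  cubic m -> 4 <= #|T| -> nbrs m v xs -> klee (expand m v xs) -> klee m.
Proof. by move=> Hc H4 Hn Hk; apply: (main_ind Hk Hc H4 Hn (giso_refl _)). Qed.
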